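(* Let $\mathcal{F}$ be a free filter on $\omega$ and let $\kappa$ be a cardinal with $\omega\le\kappa\le\mathfrak{c}$. Then $C_p(X_{\mathcal{F},\kappa})$ is separable.
   Context: A filter on $\omega$ is free if it contains all cofinite sets. $\mathfrak{c}=2^{\aleph_0}$. $X_{\mathcal{F},\kappa}$ is the space $(\kappa\times\omega)\cup\{\infty\}$ in which every point of $\kappa\times\omega$ is isolated and the neighborhoods of $\infty$ are the sets of the form $\{\infty\}\cup\bigcup\{\{\alpha\}\times A_\alpha:\alpha<\kappa\}$ with $A_\alpha\in\mathcal{F}$ for all $\alpha<\kappa$. $C_p(X)$ is the space of continuous functions $X\to\mathbb{R}$ with the topology of pointwise convergence. *)

(* Defs.v *)
From Stdlib Require Import Reals List.
Open Scope R_scope.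

Definition cofinite (A : nat -> Prop) : Prop :=
  exists l : list nat, forall n, ~ In n l -> A n.

Definition is_filter_on_nat (F : (nat -> Prop) -> Prop) : Prop :=
  F (fun _ => True) /\
  ~ F (fun _ => False) /\
  (forall A B : nat -> Prop, F A -> (forall n, A n -> B n) -> F B) /\
  (forall A B : nat -> Prop, F A -> F B -> F (fun n => A n /\ B n)).

Definition free_filter (F : (nat -> Prop) -> Prop) : Prop :=
  is_filter_on_nat F /\ forall A, cofinite A -> F A.

(* The space X_{F,kappa} = (kappa x omega) + {infinity}; the index set kappa is
   represented by a type K; [None] is the point infinity. *)
Definition XFk (K : Type) : Type := option (K * nat).

(* Open sets of X_{F,K}: points of K x omega are isolated; a set containing
   infinity is open iff it contains a basic neighbourhood
   {inf} u U_{a} {a} x A_a with all A_a in F. *)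
Definition XFk_open {K : Type} (F : (nat -> Prop) -> Prop)
  (U : XFk K -> Prop) : Prop :=
  U None ->
  exists A : K -> nat -> Prop,
    (forall a, F (A a)) /\ (forall a n, A a n -> U (Some (a, n))).

Definition XFk_continuous {K : Type} (F : (nat -> Prop) -> Prop)
  (f : XFk K -> R) : Prop :=
  forall V : R -> Prop, open_set V -> XFk_open F (fun x => V (f x)).

Definition Cp_XFk_separable {K : Type} (F : (nat -> Prop) -> Prop) : Prop :=
  exists D : nat -> (XFk K -> R),
    (forall k, XFk_continuous F (D k)) /\
    forall g : XFk K -> R, XFk_continuous F g ->
      forall (S : list (XFk K)) (eps : R), 0 < eps ->
        exists k, forall x, In x S -> Rabs (D k x - g x) < eps.

(* Main.v *)
Require Import Defs.
From Stdlib Require Import Reals List.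
From Stdlib Require Import Lra Lia ZArith.
From mathcomp Require Import choice.
Open Scope R_scope.

Definition Qc := (bool * nat * nat)%type.
Definition toR (c : Qc) : R :=
  let '(s, a, b) := c in (if s then - INR a else INR a) / INR (S b).
Definition Entry := (Qc * Qc * nat * Qc)%type.

Lemma approx (x eps : R) : 0 < eps -> exists c, Rabs (toR c - x) < eps.
Proof.
  intro He.
  destruct (archimed (/ eps)) as [H1 _].
  set (b := Z.to_nat (up (/ eps))).
  assert (Hb : / eps < INR (S b)).
  { rewrite S_INR. unfold b. rewrite INR_IZR_INZ.
    assert (0 < / eps) by (apply Rinv_0_lt_compat; lra).
    assert (0 <= IZR (up (/eps))) by lra.
    assert (0 <= up (/eps))%Z by (apply le_IZR; lra).
    rewrite Z2Nat.id by lia. lra. }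
  assert (HbP : 0 < INR (S b)) by (apply lt_0_INR; lia).
  set (y := x * INR (S b)).
  destruct (archimed y) as [Hy1 Hy2].
  set (z := up y) in *.
  assert (Hz : exists c, toR c = IZR z / INR (S b)).
  { exists (Z.ltb z 0, Z.abs_nat z, b). unfold toR.
    rewrite INR_IZR_INZ, Zabs2Nat.id_abs, abs_IZR.
    destruct (Z.ltb_spec z 0).
    - rewrite Rabs_left by (apply IZR_lt; lia). f_equal; lra.
    - rewrite Rabs_right by (apply Rle_ge, IZR_le; lia). reflexivity. }
  destruct Hz as [c Hc]. exists c. rewrite Hc.
  assert (Heq : IZR z / INR (S b) - x = (IZR z - y) / INR (S b)).
  { unfold y. field. lra. }
  rewrite Heq. rewrite Rabs_right.
  2:{ apply Rle_ge. unfold Rdiv. apply Rmult_le_pos; [lra|].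
      left; apply Rinv_0_lt_compat; lra. }
  apply Rmult_lt_reg_r with (INR (S b)); [lra|].
  unfold Rdiv. rewrite Rmult_assoc, Rinv_l by lra.
  assert (eps * INR (S b) > 1).
  { apply Rmult_lt_reg_l with (/ eps). apply Rinv_0_lt_compat; lra.
    rewrite <- Rmult_assoc, Rinv_l by lra. lra. }
  lra.
Qed.

Lemma between (x y : R) : x < y -> exists c, x < toR c < y.
Proof.
  intro H. destruct (approx ((x + y) / 2) ((y - x) / 2)) as [c Hc]; [lra|].
  exists c. apply Rabs_def2 in Hc. lra.
Qed.

Lemma interval (y : R) (ys : list R) :
  exists c1 c2, toR c1 < y < toR c2 /\
    forall y', In y' ys -> toR c1 < y' < toR c2 -> y' = y.
Proof.
  induction ys as [|y0 ys IH].
  - destruct (between (y - 1) y) as [c1 H1]; [lra|].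
    destruct (between y (y + 1)) as [c2 H2]; [lra|].
    exists c1, c2. split; [lra|]. intros y' [].
  - destruct IH as [c1 [c2 [Hy Hys]]].
    destruct (total_order_T y0 y) as [[Hlt|Heq]|Hgt].
    + destruct (between (Rmax (toR c1) y0) y) as [c H].
      { apply Rmax_lub_lt; lra. }
      pose proof (Rmax_l (toR c1) y0). pose proof (Rmax_r (toR c1) y0).
      exists c, c2. split; [lra|]. intros y' [<-|Hin] Hb; [lra|].
      apply Hys; auto; lra.
    + exists c1, c2. split; auto. intros y' [<-|Hin] Hb; auto.
    + destruct (between y (Rmin (toR c2) y0)) as [c H].
      { apply Rmin_glb_lt; lra. }
      pose proof (Rmin_l (toR c2) y0). pose proof (Rmin_r (toR c2) y0).
      exists c1, c. split; [lra|]. intros y' [<-|Hin] Hb; [lra|].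
      apply Hys; auto; lra.
Qed.

Section Look.
Variable K : Type.
Variable j : K -> R.

Fixpoint look (L : list Entry) (q0 : R) (a : K) (n : nat) : R :=
  match L with
  | nil => q0
  | (c1, c2, m, v) :: L' =>
      match Rlt_dec (toR c1) (j a), Rlt_dec (j a) (toR c2), Nat.eq_dec n m with
      | left _, left _, left _ => toR v
      | _, _, _ => look L' q0 a n
      end
  end.

Lemma look_eventually (L : list Entry) (q0 : R) :
  exists M, forall a n, (M < n)%nat -> look L q0 a n = q0.
Proof.
  induction L as [|[[[c1 c2] m] v] L IH].
  - exists 0%nat. reflexivity.
  - destruct IH as [M HM]. exists (Nat.max M m). intros a n Hn. simpl.
    destruct (Rlt_dec (toR c1) (j a)), (Rlt_dec (j a) (toR c2)),
      (Nat.eq_dec n m); try (apply HM; lia). lia.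
Qed.

Definition fP (p : Qc * list Entry) (x : XFk K) : R :=
  match x with
  | None => toR (fst p)
  | Some (a, n) => look (snd p) (toR (fst p)) a n
  end.

Lemma fP_cont F (hF : free_filter F) p : XFk_continuous F (fP p).
Proof.
  intros V _ HV. destruct (look_eventually (snd p) (toR (fst p))) as [M HM].
  exists (fun _ n => (M < n)%nat). split.
  - intro a. apply (proj2 hF). exists (seq 0 (S M)). intros n Hn.
    destruct (Nat.lt_ge_cases M n); auto. exfalso; apply Hn.
    apply in_seq. lia.
  - intros a n Hn. simpl. rewrite HM; auto.
Qed.

Hypothesis jinj : forall a b, j a = j b -> a = b.

Lemma dense_look (g : XFk K -> R) (eps : R) (q0 : R) : 0 < eps ->
  forall S : list (XFk K), exists L, forall a n, In (Some (a, n)) S ->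
    Rabs (look L q0 a n - g (Some (a, n))) < eps.
Proof.
  intros He S. induction S as [|x S IH].
  - exists nil. intros a n [].
  - destruct IH as [L HL]. destruct x as [[a n]|].
    2:{ exists L. intros a n [H|H]; [discriminate|auto]. }
    set (ys := map (fun x => match x with None => j a | Some (a', _) => j a' end) S).
    destruct (interval (j a) ys) as [c1 [c2 [Hy Hys]]].
    destruct (approx (g (Some (a, n))) eps He) as [v Hv].
    exists ((c1, c2, n, v) :: L). intros a' n' Hin. simpl.
    destruct (Rlt_dec (toR c1) (j a')) as [h1|h1];
    destruct (Rlt_dec (j a') (toR c2)) as [h2|h2];
    destruct (Nat.eq_dec n' n) as [h3|h3].
    all: destruct Hin as [Hin|Hin];
      [ injection Hin as <- <-; try (exfalso; tauto); try lra; assumption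
      | ].
    all: try (apply HL; assumption).
    subst n'. assert (Hja : j a' = j a).
    { apply Hys; [|lra]. unfold ys.
      apply (in_map (fun x => match x with None => j a | Some (a', _) => j a' end) S (Some (a', n))).
      assumption. }
    apply jinj in Hja. subst a'. assumption.
Qed.

End Look.

(* kappa is the cardinality of the type K: omega <= |K| <= c = |R|. *)
Theorem mainTheorem15 (F : (nat -> Prop) -> Prop) (K : Type)
  (hF : free_filter F)
  (hge : exists i : nat -> K, forall m n, i m = i n -> m = n)
  (hle : exists j : K -> R, forall a b, j a = j b -> a = b) :
  @Cp_XFk_separable K F.
Proof.
  destruct hle as [j hj].
  set (p0 := ((false, 0%nat, 0%nat), @nil Entry) : Qc * list Entry).
  exists (fun k => fP K j (match @unpickle (Qc * list Entry)%type k with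
                           | Some p => p | None => p0 end)).
  split.
  - intro k. apply fP_cont. exact hF.
  - intros g _ S eps He.
    destruct (approx (g None) eps He) as [c0 Hc0].
    destruct (dense_look K j hj g eps (toR c0) He S) as [L HL].
    exists (pickle ((c0, L) : Qc * list Entry)).
    rewrite pickleK. intros [[a n]|] Hin; simpl; auto.
Qed.
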